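(* Let $q>27$ be an odd prime power and let $k$ be an integer satisfying $$(q^2-q+1)\left\lceil\frac{8(q+1)}{q-1}\log q\right\rceil\leq k\leq q^3+1,$$ where $\log$ denotes the natural logarithm. Then $\mathrm{PG}(2,q^2)$ contains semiovals of size $k$.
   Context: $\mathrm{PG}(2,q^2)$ is the Desarguesian projective plane over $\mathbb{F}_{q^2}$. A semioval is a non-empty pointset $\mathcal{S}$ such that for every $P\in\mathcal{S}$ there is a unique line $t_P$ with $\mathcal{S}\cap t_P=\{P\}$. *)

(* Defs.v *)
From Stdlib Require Import Reals ZArith.
From mathcomp Require Import all_boot all_algebra.
Set Implicit Arguments. Unset Strict Implicit. Unset Printing Implicit Defensive.
Import GRing.Theory.

(* Ceiling of a real number: ceil x = - floor (- x), where Stdlib's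
   Int_part is the floor function (Int_part r = up r - 1). *)
Definition ceilR (x : R) : Z := Z.opp (Int_part (Ropp x)).

Definition semioval_lb (q : nat) : Z :=
  Z.mul (Z.of_nat (q * q - q + 1))
        (ceilR (Rmult (Rdiv (Rmult 8 (Rplus (INR q) 1)) (Rminus (INR q) 1))
                      (ln (INR q)))).

(* PG(2,F): points (and, dually, lines) are the 1-dimensional subspaces of
   F^3, represented by their unique normalized spanning vector: the first
   nonzero coordinate equals 1. *)
Definition normalized (F : fieldType) (v : 'rV[F]_3) : bool :=
  [exists i : 'I_3, (v ord0 i == 1%R) && [forall j : 'I_3, (j < i)%N ==> (v ord0 j == 0%R)]].

Definition incident (F : fieldType) (P l : 'rV[F]_3) : bool :=
  (\sum_(i < 3) P ord0 i * l ord0 i == 0)%R.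

Definition is_semioval (F : finFieldType) (S : {set 'rV[F]_3}) : Prop :=
  [/\ (forall P, P \in S -> normalized P),
      S != set0 &
      forall P, P \in S ->
        exists! l : 'rV[F]_3, normalized l /\ [set X in S | incident X l] = [set P]].

(* Main.v *)
Require Import Defs.
From Stdlib Require Import Reals Lra Lia ZArith.

Section RealPart.
Local Open Scope R_scope.

Lemma exp_INR_mul (n : nat) (x : R) : exp (INR n * x) = exp x ^ n.
Proof.
induction n as [|n IH].
- simpl. rewrite Rmult_0_l, exp_0. reflexivity.
- rewrite S_INR, Rmult_plus_distr_r, Rmult_1_l, exp_plus, IH. simpl. ring.
Qed.

Lemma exp_le_mono x y : x <= y -> exp x <= exp y.
Proof.
intros H; destruct (Rle_lt_or_eq_dec _ _ H) as [h|h].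
- left; apply exp_increasing; exact h.
- rewrite h; right; reflexivity.
Qed.

Lemma real_bound (q L : nat) : (28 <= q)%nat -> 8 * ln (INR q) <= INR L -> (2 <= L)%nat ->
  (q ^ 4 * (q * q + 1) * (q - 1) ^ (q * (L - 2)) < q ^ (q * (L - 2)))%nat.
Proof.
intros hq hL h2.
set (a := (q * (L - 2))%nat).
set (Q := INR q) in *.
assert (HQ : 28 <= Q) by (unfold Q; replace 28 with (INR 28) by (simpl; ring); apply le_INR; exact hq).
apply INR_lt.
rewrite !mult_INR, !pow_INR, plus_INR, mult_INR, minus_INR by lia.
fold Q. simpl (INR 1).
set (u := exp (- (1 / Q))).
assert (hu : Q - 1 <= Q * u).
{ pose proof (exp_ineq1_le (- (1 / Q))) as H. fold u in H.
  apply Rmult_le_compat_l with (r := Q) in H; [|lra].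
  replace (Q * (1 + - (1 / Q))) with (Q - 1) in H by (field; lra). exact H. }
assert (hY : (Q - 1) ^ a <= Q ^ a * u ^ a).
{ rewrite <- Rpow_mult_distr. apply pow_incr. lra. }
assert (haE : INR a = Q * (INR L - 2)).
{ unfold a. rewrite mult_INR, minus_INR by lia. reflexivity. }
assert (hua : u ^ a = exp (- (INR L - 2))).
{ unfold u. rewrite <- exp_INR_mul, haE. f_equal. field. lra. }
assert (hexpL : Q ^ 8 <= exp (INR L)).
{ rewrite <- (exp_ln Q) by lra. rewrite <- exp_INR_mul.
  apply exp_le_mono. simpl (INR 8). lra. }
assert (he2 : exp 2 <= 9).
{ replace 2 with (INR 2 * 1) by (simpl; ring). rewrite exp_INR_mul.
  pose proof exp_le_3. pose proof (exp_pos 1). simpl. nra. }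
assert (hZ : u ^ a * Q ^ 8 <= 9).
{ rewrite hua. apply Rle_trans with (exp (- (INR L - 2)) * exp (INR L)).
  - apply Rmult_le_compat_l; [left; apply exp_pos | exact hexpL].
  - rewrite <- exp_plus. replace (- (INR L - 2) + INR L) with 2 by ring. exact he2. }
assert (hXpos : 0 < Q ^ a) by (apply pow_lt; lra).
assert (hZpos : 0 <= u ^ a) by (apply pow_le; left; apply exp_pos).
set (X := Q ^ a) in *. set (Y := (Q - 1) ^ a) in *. set (Z := u ^ a) in *.
assert (hQ4 : Q ^ 8 = Q ^ 4 * Q ^ 4) by ring.
set (W := Q ^ 4) in *.
assert (hW : 28 * 28 * 28 * 28 <= W).
{ unfold W. simpl. assert (28 * 28 <= Q * Q) by nra. nra. }
assert (hc : W * (Q * Q + 1) * Z < 1).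
{ assert (h9 : 9 * (Q * Q + 1) < W).
  { unfold W. simpl. assert (28 * 28 <= Q * Q) by nra. nra. }
  rewrite hQ4 in hZ.
  assert (W * (Q * Q + 1) * Z * W <= 9 * (Q * Q + 1)) by nra.
  nra. }
apply Rle_lt_trans with (W * (Q * Q + 1) * (X * Z)).
- apply Rmult_le_compat_l; [nra | exact hY].
- nra.
Qed.


Lemma ceilR_ge x : x <= IZR (ceilR x).
Proof.
unfold ceilR. destruct (base_Int_part (- x)) as [h _].
rewrite opp_IZR. lra.
Qed.

Lemma lb_nat (q k : nat) : (28 <= q)%nat -> Z.le (semioval_lb q) (Z.of_nat k) ->
  exists L, (2 <= L)%nat /\ 8 * ln (INR q) <= INR L /\ ((q * q - q + 1) * L <= k)%nat.
Proof.
intros hq hk. unfold semioval_lb in hk.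
set (r := 8 * (INR q + 1) / (INR q - 1) * ln (INR q)) in *.
assert (HQ : 28 <= INR q) by (replace 28 with (INR 28) by (simpl; ring); apply le_INR; exact hq).
assert (hln : 1 < ln (INR q)).
{ rewrite <- ln_exp with 1. apply ln_increasing. apply exp_pos.
  pose proof exp_le_3. lra. }
assert (hr : 8 * ln (INR q) <= r).
{ unfold r. unfold Rdiv.
  assert (1 <= (INR q + 1) * / (INR q - 1)).
  { apply Rmult_le_reg_r with (INR q - 1); [lra|].
    rewrite Rmult_assoc, Rinv_l by lra. lra. }
  assert (0 < ln (INR q)) by lra.
  replace (8 * (INR q + 1) * / (INR q - 1) * ln (INR q))
    with (8 * ln (INR q) * ((INR q + 1) * / (INR q - 1))) by ring.
  nra. }
pose proof (ceilR_ge r) as hc.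
set (Lz := ceilR r) in *.
assert (hLz : (0 <= Lz)%Z).
{ apply le_IZR. lra. }
exists (Z.to_nat Lz).
assert (hINR : INR (Z.to_nat Lz) = IZR Lz).
{ rewrite INR_IZR_INZ, Z2Nat.id by exact hLz. reflexivity. }
split; [|split].
- assert (1 < INR (Z.to_nat Lz)) by lra.
  destruct (Z.to_nat Lz) as [|[|L]]; simpl in *; lra || lia.
- lra.
- apply Nat2Z.inj_le. rewrite Nat2Z.inj_mul, Z2Nat.id by exact hLz. exact hk.
Qed.

End RealPart.

From mathcomp Require Import all_boot all_algebra finfield ring zify.
Set Implicit Arguments. Unset Strict Implicit. Unset Printing Implicit Defensive.
Import GRing.Theory.

Section PartA.
Local Open Scope ring_scope.

Lemma card_fibers (T R : finType) (f : T -> R) (D : {set T}) d :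
  (forall x, x \in D -> #|[set y in D | f y == f x]| = d) -> #|D| = (#|f @: D| * d)%N.
Proof.
move=> H.
rewrite -sum1_card (partition_big_imset f) /= -sum_nat_const.
apply: eq_bigr => r /imsetP [x xD ->].
rewrite -(H x xD) -sum1_card; apply: eq_bigl => y; by rewrite inE.
Qed.

Lemma roots_card (F : fieldType) (T : finType) (g : T -> F) (A : {set T}) (p : {poly F}) :
  p != 0 -> {in A &, injective g} -> (forall x, x \in A -> root p (g x)) -> (#|A| < size p)%N.
Proof.
move=> p0 ginj H.
have := max_poly_roots p0 (rs := map g (enum A)).
rewrite size_map -cardE; apply.
  by apply/allP => x /mapP [y]; rewrite mem_enum => yA ->; exact: H.
rewrite map_inj_in_uniq ?enum_uniq // => x y; rewrite !mem_enum; exact: ginj.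
Qed.

End PartA.

Section PartB.
Local Open Scope ring_scope.

Section Field.
Variables (F : finFieldType) (q : nat).
Hypothesis qpchar : [pchar F].-nat q.
Hypothesis cardF : #|F| = (q * q)%N.
Hypothesis q_gt1 : (1 < q)%N.

Definition Nm (x : F) := x ^+ q.+1.
Definition Tr (y : F) := y + y ^+ q.

Lemma frobD (x y : F) : (x + y) ^+ q = x ^+ q + y ^+ q.
Proof. exact: exprDn_pchar. Qed.
Lemma frobN (x : F) : (- x) ^+ q = - x ^+ q.
Proof. exact: exprNn_pchar. Qed.
Lemma frobB (x y : F) : (x - y) ^+ q = x ^+ q - y ^+ q.
Proof. by rewrite frobD frobN. Qed.
Lemma frob2 (x : F) : (x ^+ q) ^+ q = x.
Proof. by rewrite -exprM -cardF expf_card. Qed.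
Lemma NmE x : Nm x = x * x ^+ q.
Proof. by rewrite /Nm exprS. Qed.
Lemma NmM x y : Nm (x * y) = Nm x * Nm y.
Proof. by rewrite /Nm exprMn. Qed.
Lemma Nm_frob x : (Nm x) ^+ q = Nm x.
Proof. by rewrite NmE exprMn frob2 mulrC. Qed.
Lemma Tr_frob y : (Tr y) ^+ q = Tr y.
Proof. by rewrite /Tr frobD frob2 addrC. Qed.
Lemma TrD x y : Tr (x + y) = Tr x + Tr y.
Proof. rewrite /Tr frobD; ring. Qed.
Lemma TrB x y : Tr (x - y) = Tr x - Tr y.
Proof. rewrite /Tr frobB; ring. Qed.
Lemma Nm_eq0 x : (Nm x == 0) = (x == 0).
Proof. by rewrite /Nm expf_eq0. Qed.
Lemma key_id (x m : F) : Nm x - Tr (m * x) = Nm (x - m ^+ q) - Nm m.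
Proof. rewrite !NmE frobB frob2 /Tr exprMn; ring. Qed.

Definition Kset := [set x : F | x ^+ q == x].

Lemma Kset_card : (#|Kset| <= q)%N.
Proof.
have sz : size ('X^q - 'X : {poly F}) = q.+1.
  by rewrite size_addl ?size_polyXn // size_opp size_polyX ltnS.
rewrite -ltnS -sz; apply: (roots_card (g := id)) => //.
  by rewrite -size_poly_eq0 sz.
by move=> x; rewrite inE /root !hornerE subr_eq0.
Qed.

Definition kerTr := [set y : F | Tr y == 0].

Lemma kerTr_card : (#|kerTr| <= q)%N.
Proof.
have sz : size ('X^q + 'X : {poly F}) = q.+1.
  by rewrite size_addl ?size_polyXn // size_polyX ltnS.
rewrite -ltnS -sz; apply: (roots_card (g := id)) => //.
  by rewrite -size_poly_eq0 sz.
by move=> x; rewrite inE /root !hornerE /Tr addrC.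
Qed.

Lemma Tr_fiberE y : [set y' | Tr y' == Tr y] = (fun u => u + y) @: kerTr.
Proof.
apply/setP => y'; rewrite inE; apply/eqP/imsetP.
  move=> e; exists (y' - y); last by rewrite subrK.
  by rewrite inE TrB e subrr.
by move=> [u]; rewrite inE => /eqP u0 ->; rewrite TrD u0 add0r.
Qed.

Lemma Tr_fiber_card y : #|[set y' | Tr y' == Tr y]| = #|kerTr|.
Proof. by rewrite Tr_fiberE card_imset //; exact: addIr. Qed.

Lemma Tr_count : #|kerTr| = q /\ Tr @: [set: F] = Kset.
Proof.
have H := @card_fibers F F Tr [set: F] #|kerTr|.
rewrite cardsT cardF in H.
have {}H : (q * q = #|Tr @: [set: F]| * #|kerTr|)%N.
  apply: H => x _; rewrite -(Tr_fiber_card x); apply: eq_card => y; by rewrite !inE.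
have sub : Tr @: [set: F] \subset Kset.
  by apply/subsetP => t /imsetP [y _ ->]; rewrite inE Tr_frob.
have c1 := subset_leq_card sub.
have c2 := Kset_card; have c3 := kerTr_card.
have eK : #|kerTr| = q.
  apply/eqP; rewrite eqn_leq c3 /=; rewrite leqNgt; apply/negP => lt.
  have : (#|Tr @: [set: F]| * #|kerTr| < q * q)%N.
    by apply: (leq_ltn_trans (leq_mul (leq_trans c1 c2) (leqnn _))); rewrite ltn_pmul2l //; lia.
  by rewrite -H ltnn.
split=> //; apply/eqP; rewrite eqEcard sub /=.
rewrite leqNgt; apply/negP => lt.
have : (#|Tr @: [set: F]| * #|kerTr| < q * q)%N.
  by rewrite eK ltn_pmul2r; [exact: (leq_trans lt c2)|lia].
by rewrite -H ltnn.
Qed.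

Lemma Tr_surj t : t ^+ q = t -> exists y, Tr y = t.
Proof.
move=> tK; have : t \in Tr @: [set: F] by rewrite (proj2 Tr_count) inE tK.
by case/imsetP => y _ ->; exists y.
Qed.

Lemma Tr_fiber t : t ^+ q = t -> #|[set y | Tr y == t]| = q.
Proof.
by move=> /Tr_surj [y <-]; rewrite Tr_fiber_card (proj1 Tr_count).
Qed.

Lemma Tr_fiber_le t : (#|[set y | Tr y == t]| <= q)%N.
Proof.
have [y /eqP ty|] := pickP (fun y => Tr y == t).
  by rewrite -ty Tr_fiber_card kerTr_card.
move=> nt; rewrite (eq_card0 (A := [set y | Tr y == t])) // => y; by rewrite inE nt.
Qed.

Definition kerN := [set u : F | Nm u == 1].

Lemma Nm_fiberE x : x != 0 ->
  [set y in [set z : F | z != 0] | Nm y == Nm x] = (fun u => x * u) @: kerN.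
Proof.
move=> x0; apply/setP => y; rewrite !inE; apply/idP/imsetP.
  move=> /andP [y0 /eqP e]; exists (y / x); last by rewrite mulrC divfK.
  by rewrite inE NmM e -NmM divff // /Nm expr1n.
move=> [u]; rewrite inE => /eqP u1 ->; rewrite NmM u1 mulr1 eqxx mulf_neq0 //.
by apply: contra_eq_neq u1 => ->; rewrite /Nm expr0n /= eq_sym oner_eq0.
Qed.

Lemma kerN_card : (q.+1 <= #|kerN|)%N.
Proof.
set D := [set z : F | z != 0].
have H := @card_fibers F F Nm D #|kerN|.
have {}H : #|D| = (#|Nm @: D| * #|kerN|)%N.
  apply: H => x; rewrite inE => x0; rewrite Nm_fiberE // card_imset //; exact: mulfI.
have cD : #|D| = (q * q).-1.
  have -> : D = [set~ 0] by apply/setP => z; rewrite !inE.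
  by rewrite cardsC1 cardF.
have sub : Nm @: D \subset Kset :\ 0.
  apply/subsetP => t /imsetP [y]; rewrite inE => y0 ->.
  by rewrite !inE Nm_frob eqxx andbT Nm_eq0 y0.
have c1 := subset_leq_card sub.
have cK : #|Kset :\ 0| = #|Kset|.-1.
  have k0 : (0 : F) \in Kset by rewrite inE expr0n; move: q_gt1; case: (q).
  by rewrite [in RHS](cardsD1 0 Kset) k0.
have c2 := Kset_card.
rewrite leqNgt; apply/negP => lt.
have ha : (#|Nm @: D| <= q.-1)%N.
  by apply: (leq_trans c1); rewrite cK -!subn1 leq_sub2r.
have hb : (#|kerN| <= q)%N by rewrite -ltnS.
have := leq_mul ha hb; rewrite -H cD.
case: q q_gt1 => // n _; rewrite /=; nia.
Qed.

Definition circ (z w : F) := [set z + w * u | u in kerN].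

Lemma circ_card z w : w != 0 -> (q.+1 <= #|circ z w|)%N.
Proof.
move=> w0; rewrite card_imset ?kerN_card // => u v /addrI; exact: mulfI.
Qed.

Lemma circ_Nm z w x : x \in circ z w -> Nm (x - z) = Nm w.
Proof.
by case/imsetP => u; rewrite inE => /eqP u1 ->; rewrite addrC addKr NmM u1 mulr1.
Qed.

End Field.

End PartB.

Section PartC.
Local Open Scope ring_scope.

Lemma card_bigcup_le (I T : finType) (P : pred I) (B : I -> {set T}) :
  (#|\bigcup_(i | P i) B i| <= \sum_(i | P i) #|B i|)%N.
Proof.
elim/big_rec2: _ => [|i U s _ IH]; first by rewrite cards0.
apply: leq_trans (leq_card_setU _ _) _; by rewrite leq_add2l.
Qed.

Definition onR (T : finType) (a : nat) (R : {set T}) :=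
  [set g : {ffun 'I_a -> T} | [forall j, g j \in R]].

Lemma card_onR (T : finType) a (R : {set T}) : #|onR a R| = (#|R| ^ a)%N.
Proof.
rewrite -[in RHS](card_ord a) -card_ffun_on; apply: eq_card => g.
rewrite inE; apply/forallP/ffun_onP; by [].
Qed.

Definition goodfor (T : finType) a (g : {ffun 'I_a -> T}) (E : {set T}) :=
  [exists x, exists y, [&& x != y, x \in E, y \in E, x \in g @: setT & y \in g @: setT]].

Lemma bad_card (T : finType) a (E : {set T}) :
  (#|[set g : {ffun 'I_a -> T} | ~~ goodfor g E]| <=
     (#|~: E| ^ a + #|E| * (#|~: E|.+1) ^ a))%N.
Proof.
set B := [set g | _].
have sub : B \subset onR a (~: E) :|: \bigcup_(e in E) onR a (e |: ~: E).
  apply/subsetP => g; rewrite inE => ng; rewrite inE.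
  case: (pickP (fun x => (x \in E) && (x \in g @: setT))) => [e /andP [eE eg] | none].
    apply/orP; right; apply/bigcupP; exists e => //.
    rewrite inE; apply/forallP => j; rewrite !inE.
    case: (boolP (g j \in E)) => gjE; rewrite ?orbT // orbF.
    apply: contraR ng => ne; apply/existsP; exists (g j); apply/existsP; exists e.
    by rewrite ne gjE eE eg imset_f.
  apply/orP; left; rewrite inE; apply/forallP => j; rewrite inE.
  by have := none (g j); rewrite imset_f // andbT => ->.
apply: leq_trans (subset_leq_card sub) _.
apply: leq_trans (leq_card_setU _ _) _; rewrite card_onR leq_add2l.
apply: leq_trans (card_bigcup_le (fun e => e \in E) (fun e => onR a (e |: ~: E))) _.
rewrite -sum_nat_const; apply: leq_sum => e eE.
by rewrite card_onR cardsU1 inE eE.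
Qed.

Lemma exists_good (T idx : finType) (E : idx -> {set T}) a c :
  (forall i, c.+1 <= #|E i|)%N ->
  (#|idx| * (#|T|.+1 * (#|T| - c) ^ a) < #|T| ^ a)%N ->
  exists A : {set T}, (#|A| <= a)%N /\
    forall i, exists x y, [/\ x != y, x \in A :&: E i & y \in A :&: E i].
Proof.
move=> Ec Hc.
set U := \bigcup_i [set g : {ffun 'I_a -> T} | ~~ goodfor g (E i)].
have cU : (#|U| < #|T| ^ a)%N.
  apply: leq_ltn_trans (card_bigcup_le _ _) _.
  apply: leq_ltn_trans Hc; rewrite -sum_nat_const; apply: leq_sum => i _.
  apply: leq_trans (bad_card _ _) _.
  have s1 := Ec i; have s2 : (#|E i| <= #|T|)%N by exact: max_card.
  have cc : #|~: E i| = (#|T| - #|E i|)%N by rewrite cardsCs setCK.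
  rewrite cc mulSn leq_add //.
    by case: (a) => [|a']; rewrite ?expn0 // leq_exp2r //; lia.
  by apply: leq_mul => //; case: (a) => [|a']; rewrite ?expn0 // leq_exp2r //; lia.
case: (pickP (fun g => g \notin U)) => [g gU | none]; last first.
  have : (#|[set: {ffun 'I_a -> T}]| <= #|U|)%N.
    apply: subset_leq_card; apply/subsetP => g _; by have := none g => /negbFE.
  by rewrite cardsT card_ffun card_ord leqNgt cU.
exists (g @: setT); split.
  by apply: leq_trans (leq_imset_card _ _) _; rewrite cardsT card_ord.
move=> i; have : goodfor g (E i).
  apply: contraR gU => ng; apply/bigcupP; exists i => //; by rewrite inE.
case/existsP => x /existsP [y] /and5P [xy xE yE xg yg].
by exists x, y; rewrite !inE xy xE yE xg yg.
Qed.

End PartC.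

Section PartD0.
Local Open Scope ring_scope.

Definition i1 : 'I_3 := @Ordinal 3 1 isT.
Definition i2 : 'I_3 := @Ordinal 3 2 isT.
Definition mk (F : fieldType) (a b c : F) : 'rV[F]_3 := \row_(i < 3) [:: a; b; c]`_i.

Lemma mkE (F : fieldType) (v : 'rV[F]_3) : v = mk (v ord0 ord0) (v ord0 i1) (v ord0 i2).
Proof.
apply/rowP => i; rewrite !mxE; case: i => [[|[|[|]]] Hi] //=; by congr (v _ _); apply/val_inj.
Qed.

Lemma mk_inj (F : fieldType) (a b c a' b' c' : F) :
  mk a b c = mk a' b' c' -> [/\ a = a', b = b' & c = c'].
Proof.
move=> e; have := congr1 (fun v : 'rV[F]_3 => v ord0 ord0) e; have := congr1 (fun v : 'rV[F]_3 => v ord0 i1) e;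
have := congr1 (fun v : 'rV[F]_3 => v ord0 i2) e; by rewrite !mxE.
Qed.

Lemma scale_mk (F : fieldType) (k a b c : F) : k *: mk a b c = mk (k * a) (k * b) (k * c).
Proof. apply/rowP => i; rewrite !mxE; case: i => [[|[|[|]]] Hi] //=. Qed.

Lemma incident_mk (F : fieldType) (a b c d e f : F) :
  incident (mk a b c) (mk d e f) = (a * d + b * e + c * f == 0).
Proof. by rewrite /incident !big_ord_recr big_ord0 /= !mxE add0r. Qed.

Lemma incidentZ (F : fieldType) (X l : 'rV[F]_3) k : k != 0 ->
  incident X (k *: l) = incident X l.
Proof.
move=> k0; rewrite [X]mkE [l]mkE scale_mk !incident_mk.
move: (X _ _) (X _ _) (X _ _) (l _ _) (l _ _) (l _ _) => a b c d e f.
rewrite [c * _]mulrCA [b * _]mulrCA [a * _]mulrCA -!mulrDr.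
by rewrite mulf_eq0 (negbTE k0).
Qed.

Lemma norm_uniq (F : fieldType) (u : 'rV[F]_3) k :
  normalized u -> normalized (k *: u) -> k *: u = u.
Proof.
move=> /existsP [i /andP [/eqP ui /forallP hi]] /existsP [j /andP [/eqP uj /forallP hj]].
move: uj; rewrite mxE => uj.
have [lt|ge] := ltnP i j.
  by move: (hj i); rewrite lt mxE ui mulr1 /= => /eqP k0; move: uj; rewrite k0 mul0r => /eqP; rewrite eq_sym oner_eq0.
have [lt'|ge'] := ltnP j i.
  by move: (hi j); rewrite lt' /= => /eqP uj0; move: uj; rewrite uj0 mulr0 => /eqP; rewrite eq_sym oner_eq0.
have ij : i = j by apply/val_inj/eqP; rewrite eqn_leq ge ge'.
by move: uj; rewrite -ij ui mulr1 => ->; rewrite scale1r.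
Qed.

Lemma norm_scale_mk (F : fieldType) (a b c : F) : mk a b c != 0 ->
  exists2 k, k != 0 & normalized (k *: mk a b c).
Proof.
move=> nz.
have [a0|a0] := eqVneq a 0.
  have [b0|b0] := eqVneq b 0.
    have [c0|c0] := eqVneq c 0; first by move: nz; rewrite a0 b0 c0 -(scale0r (mk 1 1 1)) scale_mk !mul0r eqxx.
    exists c^-1; rewrite ?invr_eq0 //; apply/existsP; exists i2; rewrite scale_mk !mxE /= mulVf // eqxx /=.
    apply/forallP => j; apply/implyP; case: j => [[|[|]] Hj] //= _; by rewrite mxE /= ?a0 ?b0 mulr0.
  exists b^-1; rewrite ?invr_eq0 //; apply/existsP; exists i1; rewrite scale_mk !mxE /= mulVf // eqxx /=.
  apply/forallP => j; apply/implyP; case: j => [[|[|]] Hj] //= _; by rewrite mxE /= ?a0 mulr0.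
exists a^-1; rewrite ?invr_eq0 //; apply/existsP; exists ord0; rewrite scale_mk !mxE /= mulVf // eqxx /=.
by apply/forallP => -[[|[|]] Hj].
Qed.

Lemma norm_mk1 (F : fieldType) (b c : F) : normalized (mk 1 b c).
Proof.
apply/existsP; exists ord0; rewrite mxE /= eqxx /=.
by apply/forallP => -[[|[|]] Hj].
Qed.

Lemma norm_mk001 (F : fieldType) : normalized (mk 0 0 (1 : F)).
Proof.
apply/existsP; exists i2; rewrite mxE /= eqxx /=.
apply/forallP => j; apply/implyP; case: j => [[|[|]] Hj] //= _; by rewrite mxE.
Qed.

End PartD0.

Section PartG.
Local Open Scope ring_scope.

Lemma norm_neq0 (F : fieldType) (u : 'rV[F]_3) : normalized u -> u != 0.
Proof.
move=> /existsP [i /andP [/eqP ui _]]; apply/eqP => u0; move: ui; rewrite u0 mxE.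
by move/eqP; rewrite eq_sym oner_eq0.
Qed.

Section Geom.
Variables (F : finFieldType) (q : nat).
Hypothesis qpchar : [pchar F].-nat q.
Hypothesis cardF : #|F| = (q * q)%N.
Hypothesis q_gt1 : (1 < q)%N.

Local Notation Nm := (@Nm F q).
Local Notation Tr := (@Tr F q).

Definition pt (x y : F) := mk 1 x y.
Definition inf : 'rV[F]_3 := mk 0 0 1.
Definition UP := [set xy : F * F | Tr xy.2 == Nm xy.1].
Definition Uset := inf |: [set pt xy.1 xy.2 | xy in UP].
Definition ch (x : F) := odflt 0 [pick y | Tr y == Nm x].

Lemma chP x : Tr (ch x) = Nm x.
Proof.
rewrite /ch; case: pickP => [y /eqP //|none].
have [y ty] := Tr_surj qpchar cardF q_gt1 (Nm_frob cardF x).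
by move: (none y); rewrite ty eqxx.
Qed.

Lemma pt_neq_inf x y : pt x y != inf.
Proof. by apply/eqP => /mk_inj [/eqP]; rewrite oner_eq0. Qed.

Lemma pt_inj x y x' y' : pt x y = pt x' y' -> x = x' /\ y = y'.
Proof. by move/mk_inj => []. Qed.

Definition S0 (A : {set F}) : {set 'rV[F]_3} :=
  inf |: ([set pt xy.1 xy.2 | xy in [set xy in UP | xy.1 \in A]] :|: [set pt x (ch x) | x in ~: A]).

Lemma S0_sub (A : {set F}) : S0 A \subset Uset.
Proof.
apply/subsetP => X; rewrite !inE => /orP [->//|/orP [|]] /imsetP [xy].
  rewrite inE => /andP [xyU _] ->; apply/orP; right.
  by apply/imsetP; exists xy.
move=> _ ->; apply/orP; right; apply/imsetP; exists (xy, ch xy) => //.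
by rewrite inE chP.
Qed.

Lemma pt_in_S0 (A : {set F}) x y : x \in A -> Tr y = Nm x -> pt x y \in S0 A.
Proof.
move=> xA e; rewrite !inE; apply/orP; right; apply/orP; left.
by apply/imsetP; exists (x, y) => //; rewrite !inE e eqxx xA.
Qed.

Lemma ch_in_S0 (A : {set F}) x : pt x (ch x) \in S0 A.
Proof.
case: (boolP (x \in A)) => xA; first by apply: pt_in_S0 => //; exact: chP.
by rewrite !inE; apply/orP; right; apply/orP; right; apply/imsetP; exists x; rewrite ?inE.
Qed.

Lemma inf_in_S0 (A : {set F}) : inf \in S0 A.
Proof. by rewrite !inE eqxx. Qed.

Lemma lin_comb (R : comRingType) (C D A1 B1 A2 B2 : R) :
  A1 = B1 -> A2 = B2 -> C - D = (A1 - B1) - (A2 - B2) -> C = D.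
Proof. by move=> h1 h2 e; apply/eqP; rewrite -subr_eq0 e h1 h2 !subrr. Qed.

Definition goodA (A : {set F}) := forall z w, w != 0 ->
  exists x y, [/\ x != y, x \in A :&: circ q z w & y \in A :&: circ q z w].

Lemma line_inf_mk (A : {set F}) l0 l1 l2 : normalized (mk l0 l1 l2) ->
  incident inf (mk l0 l1 l2) ->
  (forall X, X \in S0 A -> incident X (mk l0 l1 l2) -> X = inf) -> mk l0 l1 l2 = mk 1 0 0.
Proof.
move=> nl; rewrite /inf incident_mk !mul0r !add0r mul1r => /eqP l20 H; subst l2.
have [l10|l10] := eqVneq l1 0.
  subst l1; have e : mk l0 0 0 = l0 *: mk 1 0 (0 : F) by rewrite scale_mk mulr1 mulr0.
  by rewrite e; apply: norm_uniq; rewrite -?e //; exact: norm_mk1.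
set a := - l0 / l1.
have := H (pt a (ch a)) (ch_in_S0 A a).
rewrite incident_mk mul1r mulr0 addr0 /a divfK // subrr eqxx => /(_ isT) /eqP.
by rewrite (negbTE (pt_neq_inf _ _)).
Qed.

Definition T0 (x0 y0 : F) := mk (x0 ^+ q * x0 - y0) (- x0 ^+ q) 1.

Lemma line_pt_mk (A : {set F}) (hA : goodA A) x0 y0 l0 l1 l2 : Tr y0 = Nm x0 ->
  incident (pt x0 y0) (mk l0 l1 l2) ->
  (forall X, X \in S0 A -> incident X (mk l0 l1 l2) -> X = pt x0 y0) ->
  mk l0 l1 l2 = l2 *: T0 x0 y0.
Proof.
move=> P0; rewrite incident_mk mul1r => /eqP inc H.
have l2n : l2 != 0.
  apply/eqP => l20; have := H inf (inf_in_S0 A).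
  rewrite incident_mk l20 !mul0r mulr0 !addr0 eqxx => /(_ isT) /eqP.
  by rewrite eq_sym (negbTE (pt_neq_inf _ _)).
set m := - l1 / l2; set b := - l0 / l2.
have ml : l1 = - (m * l2) by rewrite /m divfK // opprK.
have bl : l0 = - (b * l2) by rewrite /b divfK // opprK.
have y0E : y0 = m * x0 + b.
  apply: (mulIf l2n); apply: (@lin_comb _ _ _ _ _ _ _ inc (erefl 0)).
  rewrite ml bl; ring.
have [mq|mq] := eqVneq (m ^+ q) x0.
  have mE : m = x0 ^+ q by rewrite -mq (frob2 cardF).
  rewrite /T0 scale_mk mulr1; congr mk.
    by rewrite bl y0E mE; ring.
  by rewrite ml mE; ring.
set w := x0 - m ^+ q.
have w0 : w != 0 by rewrite subr_eq0 eq_sym.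
have claim : forall u, u \in A :&: circ q (m ^+ q) w -> u = x0.
  move=> u; rewrite inE => /andP [uA uc].
  have cu := circ_Nm uc.
  have inS : pt u (m * u + b) \in S0 A.
    apply: pt_in_S0 => //.
    have k1 := key_id qpchar cardF u m; have k2 := key_id qpchar cardF x0 m.
    rewrite cu -/w -k2 in k1.
    move: P0; rewrite y0E (TrD qpchar) => P0.
    rewrite (TrD qpchar); apply: (lin_comb P0 k1); ring.
  have := H _ inS; rewrite incident_mk mul1r ml bl.
  have -> : - (b * l2) + u * - (m * l2) + (m * u + b) * l2 = 0 by ring.
  by rewrite eqxx => /(_ isT) /pt_inj [].
have [x [y [xy xc yc]]] := hA (m ^+ q) w w0.
by move: xy; rewrite (claim _ xc) (claim _ yc) eqxx.
Qed.


Lemma inUset X : X \in Uset -> X = inf \/ exists x y, Tr y = Nm x /\ X = pt x y.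
Proof.
rewrite /Uset in_setU1 => /orP [/eqP ->|/imsetP [xy]]; first by left.
by rewrite inE => /eqP e ->; right; exists xy.1, xy.2.
Qed.

Lemma tangent_pt x0 y0 X : Tr y0 = Nm x0 -> X \in Uset -> incident X (T0 x0 y0) -> X = pt x0 y0.
Proof.
move=> P0 /inUset [->|[x [y [e ->]]]].
  by rewrite /inf /T0 incident_mk !mul0r !add0r mul1r oner_eq0.
rewrite /T0 incident_mk mul1r mulr1 => /eqP inc.
set m := x0 ^+ q.
have yE : y = (m * x - m * x0) + y0.
  apply: (lin_comb inc (erefl 0)); rewrite /m; ring.
have k1 := key_id qpchar cardF x m; have k2 := key_id qpchar cardF x0 m.
rewrite /m (frob2 cardF) -/m in k1 k2.
have z0 : Nm (x0 - x0) = 0 by rewrite subrr /Nm expr0n.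
rewrite z0 sub0r in k2.
have : Nm (x - x0) = 0.
  rewrite yE (TrD qpchar) (TrB qpchar) in e.
  have h : Nm (x - x0) = Nm x - Tr (m * x) + Nm m by rewrite k1; ring.
  rewrite h -e P0; apply: (lin_comb k2 (erefl 0)); ring.
move/eqP; rewrite Nm_eq0 subr_eq0 => /eqP xx; subst x.
by rewrite yE subrr add0r.
Qed.

Lemma pt_on_T0 x0 y0 : incident (pt x0 y0) (T0 x0 y0).
Proof. rewrite /T0 incident_mk; apply/eqP; ring. Qed.

Lemma semioval_S (A : {set F}) (hA : goodA A) (S : {set 'rV[F]_3}) :
  S0 A \subset S -> S \subset Uset -> is_semioval S.
Proof.
move=> s0 sU; split.
- move=> P /(subsetP sU) /inUset [->|[x [y [_ ->]]]]; [exact: norm_mk001|exact: norm_mk1].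
- by apply/set0Pn; exists inf; apply: (subsetP s0); exact: inf_in_S0.
move=> P PS; have PU := subsetP sU _ PS.
have ext : forall l, normalized l -> [set X in S | incident X l] = [set P] ->
    incident P l /\ forall X, X \in S0 A -> incident X l -> X = P.
  move=> l _ e; split.
    have : P \in [set X in S | incident X l] by rewrite e set11.
    by rewrite inE => /andP [].
  move=> X XS inc; have : X \in [set X in S | incident X l] by rewrite inE (subsetP s0 _ XS).
  by rewrite e inE => /eqP.
case/inUset: PU => [PE|[x0 [y0 [P0 PE]]]].
  exists (mk 1 0 0); split; first split.
  - exact: norm_mk1.
  - apply/setP => X; rewrite !inE; apply/idP/idP.
      move=> /andP [XS]; case/inUset: (subsetP sU _ XS) => [->|[x [y [_ ->]]]]; first by rewrite PE.
      by rewrite /pt incident_mk !mulr0 !addr0 mulr1 oner_eq0.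
    by move/eqP => ->; rewrite PS PE /inf incident_mk !mulr0 !addr0 mulr1 eqxx.
  move=> l [nl e]; have [inc H] := ext l nl e.
  move: nl inc H; rewrite [l]mkE PE => nl inc H; symmetry; exact: (line_inf_mk nl inc H).
have T0n : T0 x0 y0 != 0.
  by apply/eqP => /(congr1 (fun v : 'rV[F]_3 => v ord0 i2)); rewrite !mxE /= => /eqP; rewrite oner_eq0.
have [k k0 nT] := norm_scale_mk (T0n : mk _ _ _ != 0).
exists (k *: T0 x0 y0); split; first split => //.
  apply/setP => X; rewrite !inE incidentZ //; apply/idP/idP.
    move=> /andP [XS inc]; by rewrite PE (tangent_pt P0 (subsetP sU _ XS) inc).
  by move/eqP => ->; rewrite PS PE pt_on_T0.
move=> l [nl e]; have [inc H] := ext l nl e.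
rewrite PE in inc H.
move: nl inc H; rewrite [l]mkE => nl inc H.
have le := line_pt_mk hA P0 inc H.
rewrite le in nl *.
have l2n : l ord0 i2 != 0.
  by apply: contraTneq nl => ->; rewrite scale0r; apply/negP => /norm_neq0; rewrite eqxx.
have e2 : l ord0 i2 *: T0 x0 y0 = (l ord0 i2 / k) *: (k *: T0 x0 y0).
  by rewrite scalerA divfK.
rewrite e2 in nl *; symmetry; exact: norm_uniq.
Qed.

End Geom.

End PartG.

Section PartH.
Local Open Scope ring_scope.

Lemma card_pairs (T : finType) (P : T -> T -> bool) :
  #|[set xy : T * T | P xy.1 xy.2]| = (\sum_x #|[set y | P x y]|)%N.
Proof.
rewrite -sum1_card.
have -> : (\sum_x #|[set y | P x y]| = \sum_x \sum_(y | P x y) 1)%N.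
  by apply: eq_bigr => x _; rewrite -sum1_card; apply: eq_bigl => y; rewrite inE.
rewrite pair_big_dep /=; apply: eq_bigl => -[x y]; by rewrite inE.
Qed.

Lemma extend_set (T : finType) (A B : {set T}) k :
  A \subset B -> (#|A| <= k <= #|B|)%N -> exists C : {set T}, [/\ A \subset C, C \subset B & #|C| = k].
Proof.
move=> AB /andP [h1 h2].
have [d kE] : exists d, k = (#|A| + d)%N by exists (k - #|A|)%N; lia.
subst k.
clear h1; move: h2; elim: d => [|d IH] h2; first by exists A; rewrite addn0.
have [C [AC CB cC]] : exists C : {set T}, [/\ A \subset C, C \subset B & #|C| = (#|A| + d)%N].
  by apply: IH; lia.
have : C \proper B by rewrite properEcard CB cC /=; lia.
case/properP => _ [x xB xC].
exists (x |: C); split.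
- by apply: subset_trans AC (subsetUr _ _).
- by rewrite subUset sub1set xB CB.
by rewrite cardsU1 xC cC addnS.
Qed.

Section Count.
Variables (F : finFieldType) (q : nat).
Hypothesis qpchar : [pchar F].-nat q.
Hypothesis cardF : #|F| = (q * q)%N.
Hypothesis q_gt1 : (1 < q)%N.

Lemma UP_card : #|UP F q| = (q * q * q)%N.
Proof.
rewrite /UP (card_pairs (fun x y => Tr q y == Nm q x)).
rewrite (eq_bigr (fun _ => q)) ?sum_nat_const ?card_ord.
  by rewrite cardT -cardE cardF.
move=> x _; exact: (Tr_fiber qpchar cardF q_gt1 (Nm_frob cardF x)).
Qed.

Lemma Uset_card : #|Uset F q| = (q * q * q).+1.
Proof.
rewrite /Uset cardsU1 card_imset; last by move=> [x y] [x' y'] /pt_inj [/= -> ->].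
rewrite UP_card.
suff -> : inf F \notin [set pt xy.1 xy.2 | xy in UP F q] by [].
apply/negP => /imsetP [xy _] e.
by move: (pt_neq_inf xy.1 xy.2); rewrite -e eqxx.
Qed.

Lemma S0_card (A : {set F}) : (#|S0 q A| <= 1 + q * #|A| + #|~: A|)%N.
Proof.
rewrite /S0; apply: leq_trans (leq_card_setU _ _) _; rewrite cards1 -addnA leq_add2l.
apply: leq_trans (leq_card_setU _ _) _; apply: leq_add; last exact: leq_imset_card.
apply: leq_trans (leq_imset_card _ _) _.
have -> : [set xy in UP F q | xy.1 \in A] = [set xy : F * F | (Tr q xy.2 == Nm q xy.1) && (xy.1 \in A)].
  by apply/setP => xy; rewrite !inE.
rewrite (card_pairs (fun x y => (Tr q y == Nm q x) && (x \in A))).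
rewrite mulnC -sum_nat_const (bigID (fun x => x \in A)) /= -[X in (_ <= X)%N]addn0.
apply: leq_add.
  apply: leq_sum => x xA; apply: leq_trans _ (Tr_fiber_le qpchar q_gt1 (Nm q x)).
  by apply: subset_leq_card; apply/subsetP => y; rewrite !inE xA andbT.
rewrite leqn0 sum_nat_eq0; apply/forallP => x; apply/implyP => xA.
by rewrite cards_eq0; apply/eqP/setP => y; rewrite !inE (negbTE xA) andbF.
Qed.
End Count.

End PartH.


Lemma powE m n : Nat.pow m n = expn m n.
Proof. by elim: n => //= n IH; rewrite expnS IH. Qed.

Lemma arith q x L' : (1 < q)%N -> (x <= q * L')%N -> (x <= q * q)%N ->
  (1 + q * x + (q * q - x) <= (q * q - q + 1) * (L' + 2))%N.
Proof.
move=> q1 h1 h2.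
have [y xy] : exists y, (q * q = x + y)%N by exists (q * q - x)%N; lia.
have -> : (q * q - x = y)%N by lia.
have [r qr] : exists r, q = r.+2 by exists (q - 2)%N; lia.
subst q.
have -> : ((r.+2) * (r.+2) - r.+2 + 1 = (r.+2) * (r.+1) + 1)%N by nia.
have h3 : ((r.+1) * x <= (r.+1) * ((r.+2) * L'))%N by apply: leq_mul.
nia.
Qed.

Theorem mainTheorem8 (q : nat) (F : finFieldType) (k : nat) :
  (exists p n : nat, [/\ prime p, (0 < n)%N & q = p ^ n]) ->
  odd q -> (27 < q)%N ->
  #|F| = (q ^ 2)%N ->
  Z.le (semioval_lb q) (Z.of_nat k) -> (k <= q ^ 3 + 1)%N ->
  exists S : {set 'rV[F]_3}, is_semioval S /\ #|S| = k.
Proof.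
move=> [p [n [pp n0 qE]]] _ q27 cF hk kle.
have cardF : #|F| = (q * q)%N by rewrite cF expnS expn1.
have q_gt1 : (1 < q)%N by lia.
have pc : p \in [pchar F]%R.
  by apply: (@card_finPcharP _ p (n * 2)) => //; rewrite cF qE -expnM.
have qpchar : [pchar F]%R.-nat q.
  by rewrite qE (eq_pnat _ (pcharf_eq pc)) pnatX pnat_id.
have [L [L2 [hL hkL]]] := @lb_nat q k (ltac:(lia) : (28 <= q)%coq_nat) hk.
have rb := @real_bound q L (ltac:(lia) : (28 <= q)%coq_nat) hL L2.
rewrite !powE in rb.
set a := (q * (L - 2))%N.
have rb2 : (q ^ 4 * (q * q + 1) * (q - 1) ^ a < q ^ a)%N by apply/ltP; exact: rb.
have rb' : (#|{: F * F}| * ((#|F|).+1 * (#|F| - q) ^ a) < #|F| ^ a)%N.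
  rewrite card_prod cardF.
  have e1 : (q * q - q = (q - 1) * q)%N by rewrite mulnBl mul1n.
  rewrite e1 !expnMn.
  have qa : (0 < q ^ a)%N by rewrite expn_gt0; lia.
  have e4 : (q ^ 4 = q * q * (q * q))%N by rewrite !expnS expn0 muln1 !mulnA.
  rewrite e4 addn1 in rb2.
  move: rb2 qa; move: (q ^ a)%N ((q - 1) ^ a)%N => X Y h1 h2.
  have := h1; rewrite -(ltn_pmul2r h2) => h3; nia.
pose E := fun zw : F * F => circ q zw.1 (if zw.2 == 0%R then 1%R else zw.2).
have Ec : forall i, (q.+1 <= #|E i|)%N.
  move=> [z w]; rewrite /E /=; apply: (circ_card qpchar cardF q_gt1).
  by case: ifP => [_|/negbT //]; rewrite oner_neq0.
have [A [cA gA]] := exists_good Ec rb'.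
have hA : goodA q A.
  move=> z w w0; have [x [y [xy xi yi]]] := gA (z, w).
  by exists x, y; move: xi yi; rewrite /E /= (negbTE w0).
have cA2 : (#|A| <= q * q)%N by rewrite -cardF max_card.
have cS0 : (#|S0 q A| <= k)%N.
  apply: leq_trans (S0_card qpchar q_gt1 A) _.
  have cC : #|~: A| = (q * q - #|A|)%N by rewrite -cardF -(cardsC A) addKn.
  rewrite cC.
  have hkL' : ((q * q - q + 1) * L <= k)%N by apply/leP.
  apply: leq_trans _ hkL'.
  have L2' : exists L', L = (L' + 2)%N by exists (L - 2)%N; rewrite subnK //; apply/leP.
  case: L2' => L' LE; subst L.
  rewrite /a addnK in cA *.
  exact: arith.
have cU : (k <= #|Uset F q|)%N.
  rewrite (Uset_card qpchar cardF q_gt1); apply: leq_trans kle _.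
  by rewrite addn1 !expnS expn0 muln1 mulnA.
have [S [s0 sU cS]] := extend_set (S0_sub qpchar cardF q_gt1 A) (introT andP (conj cS0 cU)).
exists S; split => //.
exact: (semioval_S qpchar cardF q_gt1 hA s0 sU).
Qed.
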